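(* Let $1 \leqslant k \leqslant n$ be integers. Let $\mathcal{C}$ be the set of all chains in $\{0,1\}^n$ of length exactly $k+1$, together with all symmetric chains in $\{0,1\}^n$ of length less than $k+1$ (chains, length and symmetry as defined in the context). Suppose there exist strictly positive real weights $w_\gamma > 0$, one for each $\gamma \in \mathcal{C}$, such that for every $x \in \{0,1\}^n$ $$\sum_{\gamma \in \mathcal{C} :\, x \in \gamma} w_\gamma = 1.$$ Call $A \subseteq \{0,1\}^n$ admissible if there are no two distinct $x, y \in A$ with $x_i \leqslant y_i$ for all $i$ and $x_i < y_i$ for at most $k$ coordinates $i$. Then: if $n$ is even, the set $B = \{x \in \{0,1\}^n : |x| \equiv \tfrac{n}{2} \pmod{k+1}\}$ is the unique admissible set of maximum cardinality; if $n$ is odd, the sets $B_1 = \{x : |x| \equiv \lfloor \tfrac{n}{2} \rfloor \pmod{k+1}\}$ and $B_2 = \{x : |x| \equiv \lceil \tfrac{n}{2} \rceil \pmod{k+1}\}$ are admissible sets of maximum cardinality and are the only ones.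
   Context: For $x \in \{0,1\}^n$, $|x|$ denotes the number of coordinates equal to $1$, and the layer $L_m$ is $\{x : |x| = m\}$. For $x, y \in \{0,1\}^n$ write $x \prec y$ if there is a coordinate $j$ with $x_i = y_i$ for all $i \neq j$, $x_j = 0$ and $y_j = 1$. A chain is an ordered tuple $(x_1, \dots, x_l)$ of elements of $\{0,1\}^n$ with $x_1 \prec x_2 \prec \dots \prec x_l$ (a single element is a chain); its length is $l$. If $x_1 \in L_m$ then $x_l \in L_{m+l-1}$, and the chain is called symmetric if $\frac{m + (m+l-1)}{2} = \frac{n}{2}$. Writing $x \in \gamma$ means $x$ is one of the entries of the chain $\gamma$. *)

(* Defs.v *)
From mathcomp Require Import all_boot all_order all_algebra.
From mathcomp Require Import reals.
Set Implicit Arguments. Unset Strict Implicit. Unset Printing Implicit Defensive.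

(* The cube {0,1}^n: x : 'I_n -> bool, x i = true meaning coordinate i is 1. *)
Definition cube (n : nat) := {ffun 'I_n -> bool}.

Definition wt n (x : cube n) : nat := #|[pred i | x i]|.

Definition prec n (x y : cube n) : bool :=
  [exists j, [&& ~~ x j, y j & [forall i, (i != j) ==> (x i == y i)]]].

(* A chain is a nonempty tuple (x_1,...,x_l) with x_1 ≺ x_2 ≺ ... ≺ x_l;
   its length is the size of the sequence. *)
Definition is_chain n (s : seq (cube n)) : bool :=
  (0 < size s) && sorted (@prec n) s.

(* symmetric: x_1 ∈ L_m, length l, and (m + (m+l-1))/2 = n/2,
   i.e. 2m + l - 1 = n. *)
Definition sym_chain n (s : seq (cube n)) : bool :=
  if s is x :: _ then (wt x).*2 + (size s).-1 == n else false.

Definition inC n k (s : seq (cube n)) : bool :=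
  is_chain s && ((size s == k.+1) || ((size s < k.+1) && sym_chain s)).

Definition Cseq n k : seq (seq (cube n)) :=
  [seq s <- flatten [seq [seq tval t | t : l.-tuple (cube n)] | l <- iota 1 k.+1]
     | inC k s].

Definition close_below n k (x y : cube n) : bool :=
  [forall i, x i <= y i] && (#|[pred i | x i < y i]| <= k).

Definition admissible n k (A : {set cube n}) : bool :=
  [forall x in A, forall y in A, (x != y) ==> ~~ close_below k x y].

Definition layerset n k (r : nat) : {set cube n} :=
  [set x | wt x == r %[mod k.+1]].

(* Main.v *)
Require Import Defs.
From mathcomp Require Import all_boot all_order all_algebra.
From mathcomp Require Import reals.
From mathcomp Require Import zify.
Set Implicit Arguments. Unset Strict Implicit. Unset Printing Implicit Defensive.


Section Cube.
Variable n : nat.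
Implicit Types x y z : cube n.

Definition le x y := [forall i, x i <= y i].

Lemma wt_le x : (wt x <= n)%N.
Proof. by rewrite /wt; apply: leq_trans (max_card _) _; rewrite card_ord. Qed.

Lemma prec_wt x y : prec x y -> wt y = (wt x).+1.
Proof.
case/existsP=> j /and3P[xj yj /forallP H].
rewrite /wt (cardD1 j) (cardD1 j [pred i | x i]) !inE (negbTE xj) yj /=.
congr (_.+1); apply: eq_card => i; rewrite !inE.
case: eqP => //= /eqP ij; have := H i; rewrite ij /= => /eqP ->. by [].
Qed.

Lemma prec_le x y : prec x y -> le x y.
Proof.
case/existsP=> j /and3P[xj yj /forallP H]; apply/forallP => i.
case: (eqVneq i j) => [->|ij]; first by rewrite yj; case: (x j).
by have := H i; rewrite ij /= => /eqP ->.
Qed.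

Lemma le_trans x y z : le x y -> le y z -> le x z.
Proof.
move=> /forallP H1 /forallP H2; apply/forallP => i.
by apply: leq_trans (H1 i) (H2 i).
Qed.

Lemma le_diff x y : le x y -> #|[pred i | x i < y i]| = wt y - wt x.
Proof.
move=> /forallP H; rewrite /wt -(cardID [pred i | x i] [pred i | y i]).
have E1 : #|[predI [pred i | y i] & [pred i | x i]]| = #|[pred i | x i]|.
  apply: eq_card => i; rewrite !inE.
  by have := H i; case: (x i); case: (y i).
rewrite E1 addKn; apply: eq_card => i; rewrite !inE.
by have := H i; case: (x i); case: (y i).
Qed.

Lemma le_eq x y : le x y -> wt x = wt y -> x = y.
Proof.
move=> Hle Hw; have := le_diff Hle; rewrite Hw subnn => /eqP.
rewrite -/(pred0b _) => /pred0P H.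
move/forallP: Hle => Hle; apply/ffunP => i.
have := H i; have := Hle i; rewrite /=; by case: (x i); case: (y i).
Qed.

Lemma chain_wt x s : sorted (@prec n) (x :: s) ->
  map (@wt n) (x :: s) = iota (wt x) (size s).+1.
Proof.
elim: s x => [|y s IH] x //= /andP[Hxy Hs].
have := IH y Hs; rewrite /= => ->; by rewrite (prec_wt Hxy).
Qed.

Lemma chain_le x s y : sorted (@prec n) (x :: s) -> y \in s -> le x y.
Proof.
elim: s x => [|z s IH] x //= /andP[Hxz Hs]; rewrite inE => /orP[/eqP->|ys].
  exact: prec_le.
exact: le_trans (prec_le Hxz) (IH z Hs ys).
Qed.

Lemma chain_uniq s : sorted (@prec n) s -> uniq s.
Proof.
case: s => [|x s] // Hs; apply: (@map_uniq _ _ (@wt n)).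
by rewrite (chain_wt Hs) iota_uniq.
Qed.

Lemma chain_wt_in x s y : sorted (@prec n) (x :: s) -> y \in s ->
  (wt x < wt y <= wt x + size s)%N.
Proof.
move=> Hs ys; have : wt y \in map (@wt n) (x :: s) by rewrite map_f // inE ys orbT.
rewrite (chain_wt Hs) mem_iota.
have : wt y != wt x.
  apply/eqP => E; have := chain_uniq Hs; rewrite /= => /andP[/negP xs _].
  by apply: xs; rewrite (le_eq (chain_le Hs ys) (esym E)).
move=> ? ?; lia.
Qed.

End Cube.

Section Ord.
Variable n : nat.

Definition pt (o : seq 'I_n) t : cube n := [ffun i => i \in take t o].
Definition full (o : seq 'I_n) := uniq o && (size o == n).

Lemma pt_wt o t : full o -> (t <= n)%N -> wt (pt o t) = t.
Proof.
case/andP=> u /eqP so tn; rewrite /wt.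
rewrite (@eq_card _ _ (mem (take t o))); last by move=> i; rewrite !inE ffunE.
rewrite (card_uniqP _) ?take_uniq // size_take so; case: ltnP => //; lia.
Qed.

Lemma pt_prec o t : full o -> (t < n)%N -> prec (pt o t) (pt o t.+1).
Proof.
case/andP=> u /eqP so tn.
have ht : (t < size o)%N by rewrite so.
set x0 := Ordinal tn.
have Ht := take_nth x0 ht.
have : uniq (take t.+1 o) by rewrite take_uniq.
rewrite Ht rcons_uniq => /andP[nj _].
apply/existsP; exists (nth x0 o t); rewrite !ffunE Ht mem_rcons inE eqxx nj /=.
apply/forallP => i; apply/implyP => ij; rewrite !ffunE Ht mem_rcons inE (negbTE ij).
by [].
Qed.

Lemma pt_path o t l : full o -> (t + l <= n)%N ->
  path (@prec n) (pt o t) (map (pt o) (iota t.+1 l)).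
Proof.
move=> F; elim: l t => [|l IH] t H //=.
rewrite pt_prec //; last by lia.
by apply: IH; lia.
Qed.

Lemma swap_pt p i j q t : t != (size p).+1 ->
  pt (p ++ i :: j :: q) t = pt (p ++ j :: i :: q) t.
Proof.
move=> ne; apply/ffunP => a; rewrite !ffunE !take_cat.
case: ltnP => // H.
have : t - size p != 1 by lia.
case: (t - size p) => [|[|d]] //= _; rewrite !mem_cat !in_cons.
by rewrite [(a == i) || _]orbCA.
Qed.

Lemma full_perm o o' : perm_eq o o' -> full o -> full o'.
Proof. by move=> P; rewrite /full (perm_uniq P) (perm_size P). Qed.

Variables (k : nat) (A : {set cube n}).
Hypothesis hkn : (k <= n)%N.
Hypothesis W : forall o, full o -> forall a, (a + k <= n)%N ->
  count (fun t => pt o t \in A) (iota a k.+1) = 1.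

Definition E o o' := forall t, (t <= n)%N -> (pt o t \in A) = (pt o' t \in A).

Lemma E_refl o : E o o. Proof. by []. Qed.
Lemma E_sym o o' : E o o' -> E o' o. Proof. by move=> H t tn; rewrite H. Qed.
Lemma E_trans o1 o2 o3 : E o1 o2 -> E o2 o3 -> E o1 o3.
Proof. by move=> H1 H2 t tn; rewrite H1 // H2. Qed.

Lemma E_swap p i j q : full (p ++ i :: j :: q) -> E (p ++ i :: j :: q) (p ++ j :: i :: q).
Proof.
move=> F t tn; case: (eqVneq t (size p).+1) => [->|ne]; last by rewrite swap_pt.
have F' : full (p ++ j :: i :: q).
  apply: full_perm F; rewrite perm_cat2l.
  by rewrite (perm_catCA [:: i] [:: j] q).
have un : ((size p).+1 < n)%N.
  by move: F => /andP[_ /eqP E]; move: E; rewrite size_cat /=; lia.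
set u := (size p).+1 in un *.
set a := u - k.
have Ha : (a + k <= n)%N by rewrite /a; lia.
have Hi : iota a k.+1 = iota a (u - a) ++ u :: iota u.+1 (a + k - u).
  have -> : k.+1 = (u - a) + (a + k - u).+1 by rewrite /a; lia.
  by rewrite iotaD; congr (_ ++ _); rewrite /a; have -> : u - k + (u - (u - k)) = u by lia.
have := W F Ha; have := W F' Ha; rewrite Hi !count_cat /=.
have -> : count (fun t => pt (p ++ i :: j :: q) t \in A) (iota a (u - a)) =
          count (fun t => pt (p ++ j :: i :: q) t \in A) (iota a (u - a)).
  apply: eq_in_count => t0; rewrite mem_iota => Ht; rewrite swap_pt //; lia.
have -> : count (fun t => pt (p ++ i :: j :: q) t \in A) (iota u.+1 (a + k - u)) =
          count (fun t => pt (p ++ j :: i :: q) t \in A) (iota u.+1 (a + k - u)).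
  apply: eq_in_count => t0; rewrite mem_iota => Ht; rewrite swap_pt //; lia.
case: (pt (p ++ [:: i, j & q]) u \in A); case: (pt (p ++ [:: j, i & q]) u \in A) => //=; lia.
Qed.

Lemma E_front s p a q : full (p ++ s ++ a :: q) -> E (p ++ s ++ a :: q) (p ++ a :: s ++ q).
Proof.
elim: s p => [|c s IH] p F; first exact: E_refl.
have F1 : full (p ++ c :: a :: s ++ q).
  apply: full_perm F; rewrite perm_cat2l /=.
  by rewrite perm_cons (perm_catCA s [:: a] q).
apply: E_trans (_ : E _ (p ++ c :: a :: s ++ q)) _.
  have := IH (rcons p c); rewrite !cat_rcons /=; apply.
  by [].
have -> : p ++ a :: (c :: s) ++ q = p ++ a :: c :: s ++ q by [].
apply: E_swap F1.
Qed.

Lemma E_perm o1 p o2 q : perm_eq o1 o2 -> full (p ++ o1 ++ q) ->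
  E (p ++ o1 ++ q) (p ++ o2 ++ q).
Proof.
elim: o1 p o2 => [|a o1 IH] p o2 P F.
  by have := perm_size P; case: o2 P => // _ _; exact: E_refl.
have : a \in o2 by rewrite -(perm_mem P) inE eqxx.
move=> Ha; move: P; case/splitPr: Ha => s r P.
have P0 : perm_eq (s ++ a :: r) (a :: s ++ r).
  by rewrite -[a :: r]cat1s -[a :: s ++ r]cat1s perm_catCA.
have P1 : perm_eq o1 (s ++ r).
  by rewrite -(perm_cons a); apply: perm_trans P P0.
have e1 : (s ++ a :: r) ++ q = s ++ a :: r ++ q by rewrite -seq.catA.
have F2 : full (p ++ s ++ a :: r ++ q).
  apply: full_perm F; rewrite perm_cat2l -e1 perm_cat2r; exact: P.
apply: E_trans (_ : E _ (p ++ a :: (s ++ r) ++ q)) _.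
  have := IH (rcons p a) (s ++ r) P1; rewrite !cat_rcons; apply.
  by move: F; rewrite /= .
rewrite e1 -seq.catA; apply: E_sym; exact: E_front F2.
Qed.

End Ord.

Lemma count1_uniq (T : eqType) (g : pred T) s x y : uniq s -> count g s = 1 ->
  x \in s -> g x -> y \in s -> g y -> y = x.
Proof.
move=> us c1 xs gx ys gy; apply/eqP/negPn/negP => yx.
have := (permP (perm_to_rem xs)) g; rewrite c1 /= gx add1n => -[] /esym c0.
have : has g (rem x s).
  by apply/hasP; exists y => //; rewrite (mem_rem_uniq x us) inE yx ys.
by rewrite has_count c0.
Qed.

Lemma residue (g : nat -> bool) n k : (k <= n)%N ->
  (forall a, (a + k <= n)%N -> count g (iota a k.+1) = 1) ->
  exists2 t0, (t0 <= k)%N & forall t, (t <= n)%N -> g t = (t %% k.+1 == t0).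
Proof.
move=> kn W.
have W0 := W 0 kn.
have : has g (iota 0 k.+1) by rewrite has_count W0.
case/hasP => t0; rewrite mem_iota /= => t0k gt0.
have U : forall t, (t <= k)%N -> g t = (t == t0).
  move=> t tk; apply/idP/eqP => [gt|->//].
  apply: (count1_uniq (iota_uniq 0 k.+1) W0) => //; rewrite mem_iota; lia.
have PER : forall a, (a + k.+1 <= n)%N -> g (a + k.+1) = g a.
  move=> a ak.
  have h1 : count g (iota a k.+2) = g a + 1.
    have -> : iota a k.+2 = a :: iota a.+1 k.+1 by [].
    rewrite -cat1s count_cat W; last by lia.
    by rewrite /= addn0.
  have : count g (iota a (k.+1 + 1)) = 1 + g (a + k.+1).
    by rewrite iotaD count_cat W /=; [lia|lia].
  rewrite addn1 h1; case: (g a); case: (g (a + k.+1)) => //=.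
have Q : forall q t, (t <= k)%N -> (t + q * k.+1 <= n)%N -> g (t + q * k.+1) = g t.
  elim=> [|q IH] t tk H; first by rewrite mul0n addn0.
  have -> : t + q.+1 * k.+1 = (t + q * k.+1) + k.+1 by rewrite mulSn; lia.
  rewrite PER; last by rewrite mulSn in H; lia.
  by apply: IH => //; rewrite mulSn in H; lia.
exists t0 => // t tn.
have tk : (t %% k.+1 <= k)%N by rewrite -ltnS ltn_pmod.
rewrite {1}(divn_eq t k.+1) addnC Q //; last by rewrite addnC -divn_eq.
exact: U.
Qed.

Lemma cnt_iota_mod k r m :
  count (fun t => t %% k.+1 == r %% k.+1) (iota m k.+1) = 1.
Proof.
elim: m => [|m IH].
  rewrite (@eq_in_count _ _ (pred1 (r %% k.+1))); last first.
    by move=> t; rewrite mem_iota /= => H; rewrite modn_small //; lia.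
  by rewrite count_uniq_mem ?iota_uniq // mem_iota /= ltn_pmod.
have : count (fun t => t %% k.+1 == r %% k.+1) (iota m k.+2) =
       count (fun t => t %% k.+1 == r %% k.+1) (iota m (k.+1 + 1)) by rewrite addn1.
rewrite {1}[iota m k.+2]/= iotaD count_cat IH /= modnDr.
by case: (m %% k.+1 == r %% k.+1) => /=; lia.
Qed.

Lemma cnt_iota_short k r m l : (l <= k.+1)%N -> (m <= r < m + l)%N ->
  count (fun t => t %% k.+1 == r %% k.+1) (iota m l) = 1.
Proof.
move=> lk H.
have := cnt_iota_mod k r m.
have -> : k.+1 = l + (k.+1 - l) by lia.
rewrite iotaD count_cat.
have : has (fun t => t %% (l + (k.+1 - l)) == r %% (l + (k.+1 - l))) (iota m l).
  by apply/hasP; exists r => //; rewrite mem_iota.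
rewrite has_count; lia.
Qed.

Section CC.
Variables n k : nat.

Lemma inC_Cseq g : inC k g -> g \in Cseq n k.
Proof.
move=> H; rewrite mem_filter H andTb.
have /andP[/andP[s0 _] sz] := H.
apply/flattenP; exists [seq tval t | t : (size g).-tuple (cube n)].
  apply/mapP; exists (size g) => //; rewrite mem_iota; move: sz.
  by case/orP => [/eqP ->|/andP[]]; lia.
by apply/mapP; exists (in_tuple g) => //; rewrite mem_enum.
Qed.

Lemma Cseq_inC (g : seq (cube n)) : g \in Cseq n k -> inC k g.
Proof. by rewrite mem_filter => /andP[]. Qed.

Lemma inC_uniq (g : seq (cube n)) : inC k g -> uniq g.
Proof. by case/andP => /andP[_ /chain_uniq]. Qed.

Lemma card_count (A : {set cube n}) g : uniq g ->
  #|[set x in A | x \in g]| = count (mem A) g.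
Proof.
move=> ug; rewrite -size_filter -(card_uniqP _); last exact: filter_uniq.
by apply: eq_card => x; rewrite !inE mem_filter andbC.
Qed.

Lemma adm_count (A : {set cube n}) g : admissible k A -> inC k g ->
  (count (mem A) g <= 1)%N.
Proof.
move=> /forallP adm /andP[/andP[_ sg] sz].
have szk : (size g <= k.+1)%N by case/orP: sz => [/eqP->|/andP[/ltnW]].
elim: g sg szk {sz} => [|x s IH] //= sg szk.
case xA: (x \in A) => /=.
  rewrite -[X in (_ <= X)%N]addn0 leq_add2l leqn0 eqn0Ngt -has_count.
  apply/hasPn => y ys; apply/negP => yA.
  have := adm x; rewrite xA /= => /forallP /(_ y); rewrite (_ : y \in A) //= => /implyP H.
  have le := chain_le sg ys; have hw := chain_wt_in sg ys.
  have : x != y by apply/eqP => E; rewrite E ltnn in hw.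
  move/H; apply/negP/negPn; rewrite /close_below.
  apply/andP; split; first exact: le.
  by rewrite (le_diff le); lia.
apply: IH; [exact: path_sorted sg | lia].
Qed.

Definition goodr r := forall m l, (0 < l)%N -> m.*2 + l.-1 = n -> (m <= r < m + l)%N.

Lemma layer_count r : goodr r -> forall g : seq (cube n), inC k g ->
  count (mem (layerset n k r)) g = 1.
Proof.
move=> gr [|x s] // /andP[/andP[_ sg] sz].
have -> : count (mem (layerset n k r)) (x :: s) =
  count (fun t => t %% k.+1 == r %% k.+1) (map (@wt n) (x :: s)).
  by rewrite count_map; apply: eq_count => y; rewrite /= inE.
rewrite (chain_wt sg).
case/orP: sz => [/eqP <-|/andP[lt sy]]; first exact: cnt_iota_mod.
apply: cnt_iota_short; first exact: ltnW.
apply: gr => //; by move: sy; rewrite /sym_chain => /eqP.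
Qed.

Lemma modeq_small a b : (a <= b)%N -> (b - a <= k)%N -> a %% k.+1 = b %% k.+1 -> a = b.
Proof.
move=> ab bk E.
have : (a + 0 == a + (b - a) %[mod k.+1]) by rewrite addn0 subnKC // E.
rewrite eqn_modDl mod0n modn_small; last lia.
move/eqP => h; lia.
Qed.

Lemma layer_adm r : admissible k (layerset n k r).
Proof.
apply/forallP => x; apply/implyP; rewrite inE => xr.
apply/forallP => y; apply/implyP; rewrite inE => yr.
apply/implyP => xy; apply/negP => /andP[lexy dk].
have le' : le x y := lexy.
rewrite (le_diff le') in dk.
have hw : (wt x <= wt y)%N.
  apply: subset_leq_card; apply/subsetP => i; rewrite !inE.
  by move/forallP: lexy => /(_ i); case: (x i); case: (y i).
move/eqP: xr; move/eqP: yr => yr xr.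
have := modeq_small hw dk; rewrite xr yr => /(_ erefl) E.
by move: xy; rewrite (le_eq le' E) eqxx.
Qed.

End CC.

Section O2.
Variable n : nat.

Lemma full_enum : full (enum 'I_n).
Proof. by rewrite /full enum_uniq size_enum_ord eqxx. Qed.

Lemma full_perm_enum (o : seq 'I_n) : full o -> perm_eq o (enum 'I_n).
Proof.
case/andP=> u /eqP so.
have hs : (size (enum 'I_n) <= size o)%N by rewrite size_enum_ord so.
have [_ H] := uniq_min_size u (fun i _ => mem_enum _ i) hs.
by apply: uniq_perm => //; exact: enum_uniq.
Qed.

Lemma exists_ord (x : cube n) : exists2 o, full o & pt o (wt x) = x.
Proof.
set o := enum [pred i | x i] ++ enum [pred i | ~~ x i].
have so1 : size (enum [pred i | x i]) = wt x by rewrite -cardE.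
exists o.
  rewrite /full cat_uniq !enum_uniq /= size_cat -!cardE.
  apply/andP; split.
    rewrite andbT; apply/hasPn => i; rewrite /= !mem_enum !inE; by case: (x i).
  rewrite -[X in _ == X](card_ord n) -(cardC [pred i | x i]).
  by apply/eqP; congr (_ + _); apply: eq_card => i; rewrite !inE.
apply/ffunP => i; rewrite ffunE take_size_cat // mem_enum.
by [].
Qed.
End O2.
Import Order.TTheory GRing.Theory Num.Theory.
Local Open Scope ring_scope.

Lemma sum_ge0_eq0 (R : numDomainType) (T : eqType) (r : seq T) (F : T -> R) :
  (forall g, g \in r -> 0 <= F g) -> \sum_(g <- r) F g <= 0 ->
  forall g, g \in r -> F g = 0.
Proof.
move=> H S g gr; apply/eqP; rewrite eq_le H // andbT.
apply: le_trans S; rewrite (big_rem g gr) /= lerDl.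
rewrite big_seq_cond; apply: sumr_ge0 => i /andP[ir _].
by apply: H; apply: (mem_rem ir).
Qed.

Theorem lemma3p4 (R : realType) (n k : nat) (hk1 : (1 <= k)%N) (hkn : (k <= n)%N)
  (w : seq (cube n) -> R)
  (hpos : forall g, g \in Cseq n k -> 0 < w g)
  (hcov : forall x : cube n, \sum_(g <- Cseq n k | x \in g) w g = 1) :
  forall A : {set cube n},
    (admissible k A /\
       forall A' : {set cube n}, admissible k A' -> (#|A'| <= #|A|)%N)
    <->
    (if ~~ odd n then A = layerset n k n./2
     else A = layerset n k n./2 \/ A = layerset n k (uphalf n)).
Proof.
set Cs := Cseq n k.
have LY : forall A : {set cube n},
    (#|A|%:R : R) = \sum_(g <- Cs) w g *+ count (mem A) g.
  move=> A.
  have -> : (#|A|%:R : R) = \sum_(x in A) \sum_(g <- Cs | x \in g) w g.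
    by rewrite -sumr_const; apply: eq_bigr => x _; rewrite hcov.
  rewrite (exchange_big_dep xpredT) //=.
  apply: eq_big_seq => g gC.
  rewrite -card_count; last exact: inC_uniq (Cseq_inC gC).
  by rewrite -sumr_const; apply: eq_bigl => x; rewrite !inE.
set S := \sum_(g <- Cs) w g.
have UB : forall A : {set cube n}, admissible k A -> (#|A|%:R : R) <= S.
  move=> A adm; rewrite LY /S big_seq [X in _ <= X]big_seq.
  apply: ler_sum => g gC.
  have := adm_count adm (Cseq_inC gC).
  case: (count (mem A) g) => [|[|//]] _; first by rewrite mulr0n ltW ?hpos.
  by rewrite mulr1n.
have LB : forall r, goodr n r -> (#|layerset n k r|%:R : R) = S.
  move=> r gr; rewrite LY /S big_seq [RHS]big_seq; apply: eq_bigr => g gC.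
  by rewrite (layer_count gr (Cseq_inC gC)) mulr1n.
have MAX : forall r, goodr n r -> admissible k (layerset n k r) /\
    forall A' : {set cube n}, admissible k A' -> (#|A'| <= #|layerset n k r|)%N.
  move=> r gr; split; first exact: layer_adm.
  by move=> A' adm; rewrite -(ler_nat R) (LB r gr) UB.
have odh := odd_double_half n.
have G0 : goodr n n./2 by move=> m l l0 e; lia.
have G1 : odd n -> goodr n (uphalf n).
  by move=> on m l l0 e; rewrite uphalf_half on; lia.
move=> A; split; last first.
  case: ifP => [_ ->|on [->|->]]; [exact: MAX|exact: MAX|].
  by apply: MAX; apply: G1; apply/negbFE.
case=> adm Amax.
have H1 : forall g, g \in Cs -> count (mem A) g = 1%N.
  have le1 : S <= (#|A|%:R : R) by rewrite -(LB _ G0) ler_nat Amax //; case: (MAX _ G0).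
  have D : \sum_(g <- Cs) (w g - w g *+ count (mem A) g) <= 0.
    by rewrite sumrB -LY subr_le0.
  move=> g gC.
  have := sum_ge0_eq0 _ D gC.
  have c1 := adm_count adm (Cseq_inC gC).
  case: (count (mem A) g) c1 => [|[|//]] _; last by [].
  rewrite mulr0n subr0 => /(_ _) h; have := hpos _ gC.
  rewrite h ?ltxx // => g' g'C.
  have := adm_count adm (Cseq_inC g'C).
  case: (count (mem A) g') => [|[|//]] _; first by rewrite mulr0n subr0 ltW ?hpos.
  by rewrite mulr1n subrr.
have W : forall o, full o -> forall a, (a + k <= n)%N ->
    count (fun t => pt o t \in A) (iota a k.+1) = 1%N.
  move=> o F a ak.
  have inc : inC k (map (pt o) (iota a k.+1)).
    rewrite /inC /is_chain size_map size_iota eqxx orTb andbT /=.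
    exact: pt_path.
  by have := H1 _ (inC_Cseq inc); rewrite count_map.
have EE : forall o, full o -> E A o (enum 'I_n).
  move=> o F.
  have := E_perm hkn W (full_perm_enum F) (p := [::]) (q := [::]).
  by rewrite /= !cats0; apply.
have W' : forall a, (a + k <= n)%N ->
    count (fun t => pt (enum 'I_n) t \in A) (iota a k.+1) = 1%N.
  by move=> a; apply: W; exact: full_enum.
have [t0 t0k Hg] := residue hkn W'.
have memA : forall x, (x \in A) = (wt x %% k.+1 == t0)%N.
  move=> x; have [o F e] := exists_ord x.
  by rewrite -{1}e (EE o F (wt x) (wt_le x)) Hg // wt_le.
have h2n : (n./2 < n)%N || (n == 0)%N by lia.
set x := pt (enum 'I_n) n./2.
have wx : wt x = n./2 by rewrite pt_wt ?full_enum //; lia.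
have lay : forall r, (r %% k.+1 == t0)%N -> A = layerset n k r.
  move=> r /eqP hr; apply/setP => y; rewrite memA inE -hr.
  by rewrite eq_sym.
case: ifP => ev.
  have hx : inC k [:: x].
    rewrite /inC /is_chain /= /sym_chain /= wx; apply/orP; right.
    by rewrite ltnS hk1 /=; apply/eqP; lia.
  have := H1 _ (inC_Cseq hx); rewrite /= addn0.
  case xA : (x \in A) => // _.
  by apply: lay; rewrite -wx -memA xA.
have on : odd n by apply/negbFE.
have nlt : (n./2 < n)%N by lia.
set y := pt (enum 'I_n) n./2.+1.
have wy : wt y = n./2.+1 by rewrite pt_wt ?full_enum //; lia.
have hxy : inC k [:: x; y].
  rewrite /inC /is_chain /= pt_prec ?full_enum //=.
  case: (ltngtP 1 k) => [k1|k1|<-]; [|by move: k1 hk1; lia|by rewrite eqxx].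
  apply/orP; right; rewrite ltnS k1 /sym_chain /= wx; apply/eqP; lia.
have := H1 _ (inC_Cseq hxy); rewrite /= addn0.
case xA : (x \in A).
  by move=> _; left; apply: lay; rewrite -wx -memA xA.
case yA : (y \in A) => // _; right; apply: lay.
by rewrite uphalf_half on add1n -wy -memA yA.
Qed.
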